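(* Let $X$ be a nonempty set and $\mathcal{B}$ a real vector space of bounded functions $X\to\mathbb{R}$ that is closed under pointwise multiplication, pointwise max and min, and satisfies $f\wedge 1\in\mathcal{B}$ for all $f\in\mathcal{B}$. Let $A(\mathcal{B})$ be the supremum-norm closure of $\mathcal{B}+i\mathcal{B}=\{f_1+if_2: f_1,f_2\in\mathcal{B}\}$. Then for every nonnegative real-valued function $f\in A(\mathcal{B})$ there exists a monotonically increasing sequence $(f_n)_n$ of nonnegative functions $f_n\in\mathcal{B}$ converging to $f$ pointwise on $X$. *)

(* Defs.v *)
From Stdlib Require Import Reals.
From Coquelicot Require Import Coquelicot.
Open Scope R_scope.

Definition bounded_fun {X : Type} (f : X -> R) : Prop :=
  exists M : R, forall x, Rabs (f x) <= M.

Record admissible_space {X : Type} (B : (X -> R) -> Prop) : Prop := {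
  adm_bounded : forall f, B f -> bounded_fun f;
  adm_zero : B (fun _ => 0);
  adm_add : forall f g, B f -> B g -> B (fun x => f x + g x);
  adm_scal : forall (a : R) f, B f -> B (fun x => a * f x);
  adm_mul : forall f g, B f -> B g -> B (fun x => f x * g x);
  adm_max : forall f g, B f -> B g -> B (fun x => Rmax (f x) (g x));
  adm_min : forall f g, B f -> B g -> B (fun x => Rmin (f x) (g x));
  adm_min1 : forall f, B f -> B (fun x => Rmin (f x) 1)
}.

Definition A_of {X : Type} (B : (X -> R) -> Prop) (g : X -> C) : Prop :=
  forall eps : R, 0 < eps ->
    exists f1 f2 : X -> R, B f1 /\ B f2 /\
      forall x, Cmod (Cminus (g x) (Cplus (RtoC (f1 x)) (Cmult Ci (RtoC (f2 x))))) <= eps.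

(* Main.v *)
Require Import Defs.
From Stdlib Require Import Reals Lra Lia ClassicalEpsilon.
From Coquelicot Require Import Coquelicot.
Open Scope R_scope.

Lemma trunc_val c y : 0 < c -> y + -1 * (c * Rmin (/ c * y) 1) = Rmax (y - c) 0.
Proof.
  intros Hc. unfold Rmin, Rmax.
  destruct (Rle_dec (/ c * y) 1) as [H|H]; destruct (Rle_dec (y - c) 0) as [H'|H'].
  - field. lra.
  - exfalso. apply H'. apply Rmult_le_compat_l with (r := c) in H; [|lra].
    replace (c * (/ c * y)) with y in H by (field; lra). lra.
  - exfalso. apply H. apply Rmult_le_reg_l with c; [lra|].
    replace (c * (/ c * y)) with y by (field; lra). lra.
  - ring.
Qed.

Lemma trunc_B {X} (B : (X -> R) -> Prop) (hB : admissible_space B) c g :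
  0 < c -> B g -> B (fun x => g x + -1 * (c * Rmin (/ c * g x) 1)).
Proof.
  intros Hc Hg. apply (adm_add _ hB); auto.
  apply (adm_scal _ hB).
  apply (adm_scal _ hB) with (f := fun x => Rmin (/ c * g x) 1).
  apply (adm_min1 _ hB) with (f := fun x => / c * g x).
  apply (adm_scal _ hB); auto.
Qed.

Definition eps_n (n : nat) : R := / (INR n + 1).

Lemma eps_pos n : 0 < eps_n n.
Proof. unfold eps_n. apply Rinv_0_lt_compat. pose proof (pos_INR n). lra. Qed.

Fixpoint runmax {X} (h : nat -> X -> R) (n : nat) (x : X) : R :=
  match n with
  | O => h O x
  | S m => Rmax (runmax h m x) (h (S m) x)
  end.

Theorem mainTheorem5 (X : Type) (B : (X -> R) -> Prop)
  (hX : inhabited X) (hB : admissible_space B)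
  (f : X -> R) (hf0 : forall x, 0 <= f x) (hfA : A_of B (fun x => RtoC (f x))) :
  exists fn : nat -> X -> R,
    (forall n, B (fn n)) /\
    (forall n x, 0 <= fn n x) /\
    (forall n x, fn n x <= fn (S n) x) /\
    (forall x, Un_cv (fun n => fn n x) (f x)).
Proof.
  assert (Hg : forall n, exists g : X -> R, B g /\ forall x, Rabs (f x - g x) <= eps_n n).
  { intro n. destruct (hfA (eps_n n) (eps_pos n)) as [f1 [f2 [H1 [H2 H3]]]].
    exists f1. split; auto. intro x. eapply Rle_trans; [|apply (H3 x)].
    eapply Rle_trans; [|apply Rmax_Cmod]. eapply Rle_trans; [|apply Rmax_l].
    simpl. right. f_equal. ring. }
  set (g := fun n => proj1_sig (constructive_indefinite_description _ (Hg n))).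
  assert (HgB : forall n, B (g n)) by (intro n; exact (proj1 (proj2_sig (constructive_indefinite_description _ (Hg n))))).
  assert (Hgf : forall n x, Rabs (f x - g n x) <= eps_n n) by (intros n; exact (proj2 (proj2_sig (constructive_indefinite_description _ (Hg n))))).
  clearbody g.
  set (h := fun n x => g n x + -1 * (2 * eps_n n * Rmin (/ (2 * eps_n n) * g n x) 1)).
  assert (HhB : forall n, B (h n)).
  { intro n. apply trunc_B; auto. pose proof (eps_pos n). lra. }
  assert (Hh : forall n x, 0 <= h n x /\ h n x <= f x /\ f x - 3 * eps_n n <= h n x).
  { intros n x. unfold h. rewrite trunc_val by (pose proof (eps_pos n); lra).
    pose proof (Hgf n x) as H. apply Rabs_le_between in H. pose proof (eps_pos n).
    pose proof (hf0 x).
    unfold Rmax; destruct (Rle_dec _ _); lra. }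
  exists (runmax h).
  assert (Hprop : forall n x, h n x <= runmax h n x /\ 0 <= runmax h n x /\ runmax h n x <= f x).
  { induction n; intro x; simpl.
    - pose proof (Hh O x). lra.
    - destruct (IHn x) as [_ [A1 A2]]. pose proof (Hh (S n) x).
      pose proof (Rmax_l (runmax h n x) (h (S n) x)).
      pose proof (Rmax_r (runmax h n x) (h (S n) x)).
      split; [lra|]. split; [lra|]. unfold Rmax; destruct (Rle_dec _ _); lra. }
  split; [|split; [|split]].
  - induction n; simpl; auto. apply (adm_max _ hB); auto.
  - intros n x. apply Hprop.
  - intros n x. simpl. apply Rmax_l.
  - intros x eps Heps.
    destruct (INR_unbounded (3 / eps)) as [N HN].
    exists N. intros n Hn. unfold Rdist.
    destruct (Hprop n x) as [A1 [A2 A3]]. pose proof (Hh n x) as [_ [_ A4]].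
    assert (Hn' : INR N <= INR n) by (apply le_INR; lia).
    assert (E : 3 * eps_n n < eps).
    { unfold eps_n. pose proof (pos_INR n).
      assert (3 < eps * INR n).
      { replace 3 with (eps * (3 / eps)) by (field; lra).
        apply Rmult_lt_compat_l; lra. }
      apply Rmult_lt_reg_r with (INR n + 1); [lra|].
      replace (3 * / (INR n + 1) * (INR n + 1)) with 3 by (field; lra). nra. }
    rewrite Rabs_left1; lra.
Qed.
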